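(* Let $\mathbf A\in\mathbb R^{n\times p}$ have columns with $\mathbf 1^T\mathbf a_k=0$ and $\|\mathbf a_k\|_2=1$ for $k=1,\dots,p$, and let $\rho_{ij}=\mathbf a_i^T\mathbf a_j$. Let $\mathbf y\in\mathbb R^n$, let $\mathbf w$ be a weight vector as in the context and $\Delta:=\min\{w_l-w_{l+1}: l=1,\dots,p-1\}$. Let $\widehat{\mathbf x}$ be any minimizer of $\|\mathbf A\mathbf x-\mathbf y\|_1+\Omega_{\mathbf w}(\mathbf x)$ over $\mathbf x\in\mathbb R^p$. Then for every pair $(i,j)$ with $\sqrt{n(2-2\rho_{ij}\operatorname{sign}(\widehat x_i\widehat x_j))}<\Delta$, we have $|\widehat x_i|=|\widehat x_j|$.
   Context: $\mathbf w=(w_1,\dots,w_p)\in\mathbb R^p_+$ satisfies $w_1\ge w_2\ge\cdots\ge w_p\ge0$ and $w_1>0$. The ordered weighted $\ell_1$ (OWL) norm is $\Omega_{\mathbf w}(\mathbf x)=\sum_{i=1}^p w_i|x|_{[i]}$, where $|x|_{[i]}$ denotes the $i$-th largest component of $\mathbf x$ in magnitude. $\mathbf a_k$ is the $k$-th column of $\mathbf A$, $\mathbf 1$ the all-ones vector, $\operatorname{sign}$ the sign function. *)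

(* Defs.v *)
From HB Require Import structures.
From mathcomp Require Import all_boot all_order all_algebra.
From mathcomp Require Import reals.
Set Implicit Arguments. Unset Strict Implicit. Unset Printing Implicit Defensive.
Import Order.TTheory GRing.Theory Num.Theory.
Local Open Scope ring_scope.

(* Weights are indexed from 0: w_1, ..., w_p of the paper are w 0, ..., w (p-1). *)

Definition sorted_abs (R : realType) (p : nat) (x : 'cV[R]_p) : seq R :=
  sort (fun a b : R => b <= a) [seq `|x k 0| | k <- enum 'I_p].

Definition owl (R : realType) (p : nat) (w : nat -> R) (x : 'cV[R]_p) : R :=
  \sum_(i < p) w i * nth 0 (sorted_abs x) i.

Definition l1norm (R : realType) (n : nat) (v : 'cV[R]_n) : R :=
  \sum_(r < n) `|v r 0|.

(* Delta = min { w_l - w_{l+1} : l = 1..p-1 }  (meaningful for p >= 2; the seed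
   w_1 - w_2 is itself one of the terms) *)
Definition owl_gap (R : realType) (p : nat) (w : nat -> R) : R :=
  \big[Num.min/(w 0%N - w 1%N)]_(l < p.-1) (w l - w l.+1).

Definition col_corr (R : realType) (n p : nat) (A : 'M[R]_(n, p)) (i j : 'I_p) : R :=
  \sum_(r < n) A r i * A r j.

(* Main.v *)
Require Import Defs.
From HB Require Import structures.
From mathcomp Require Import all_boot all_order all_algebra.
From mathcomp Require Import reals.
From mathcomp Require Import ring lra.
Import Order.TTheory GRing.Theory Num.Theory.
Local Open Scope ring_scope.
Set Implicit Arguments. Unset Strict Implicit.

Definition Fs (R : realType) (w : nat -> R) (t : seq R) : R :=
  \sum_(k < size t) w k * nth 0 t k.

Arguments Fs {R}.
Definition geR (R : realType) := fun a b : R => b <= a.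

Lemma geR_tr (R : realType) : transitive (@geR R).
Proof. by move=> b a c hab hbc; rewrite /geR; apply: le_trans hbc hab. Qed.
Lemma geR_anti (R : realType) : antisymmetric (@geR R).
Proof. by move=> a b /andP[h1 h2]; apply/le_anti; rewrite /geR in h1 h2; rewrite h1 h2. Qed.
Lemma geR_total (R : realType) : total (@geR R).
Proof. by move=> a b; rewrite /geR orbC le_total. Qed.

Lemma Fs_cons (R : realType) (w : nat -> R) (a : R) (t : seq R) :
  Fs w (a :: t) = w 0%N * a + Fs (fun k => w k.+1) t.
Proof. by rewrite /Fs /= big_ord_recl. Qed.

Lemma ins_le (R : realType) (a : R) (v : seq R) : forall (w : nat -> R) (u : seq R),
  (forall l, w l.+1 <= w l) -> sorted (@geR R) v -> sorted (@geR R) u ->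
  perm_eq u (a :: v) -> Fs w (a :: v) <= Fs w u.
Proof.
elim: v => [|b v0 IH] w u hw hv hu hp.
  by rewrite (sorted_eq (@geR_tr R) (@geR_anti R) hu _ hp).
have [hba|hab] := leP b a.
  have hs : sorted (@geR R) [:: a, b & v0] by rewrite /= {1}/geR hba.
  by rewrite (sorted_eq (@geR_tr R) (@geR_anti R) hu hs hp).
case: u hu hp => [|c u0] hu hp; first by have := perm_size hp.
have hbu : b \in c :: u0 by rewrite (perm_mem hp) !inE eqxx orbT.
have hcu : c \in [:: a, b & v0] by rewrite -(perm_mem hp) mem_head.
have hall := order_path_min (@geR_tr R) hu.
have hallv := order_path_min (@geR_tr R) hv.
have hbc : b <= c.
  move: hbu; rewrite inE => /orP[/eqP->//|]; move/allP: hall => H /H.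
  by rewrite /geR.
have hcb : c = b.
  apply/le_anti; rewrite hbc andbT.
  move: hcu; rewrite !inE => /orP[/eqP hca|/orP[/eqP->//|hcv]].
  - by move: hab; rewrite -hca => /(le_lt_trans hbc); rewrite ltxx.
  - by move/allP: hallv => /(_ c hcv).
subst c.
have hp2 : perm_eq u0 (a :: v0).
  rewrite -(perm_cons b); apply: (perm_trans hp).
  by rewrite (perm_catCA [:: a] [:: b] v0).
have H := IH (fun k => w k.+1) u0 (fun l => hw l.+1) (path_sorted hv) (path_sorted hu) hp2.
rewrite !Fs_cons in H *.
have hw0 := hw 0%N.
move: H; set S := Fs _ v0 => H.
suff : w 0%N * a + w 1%N * b <= w 0%N * b + w 1%N * a by lra.
have : 0 <= (w 0%N - w 1%N) * (b - a) by apply: mulr_ge0; lra.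
lra.
Qed.

Lemma rearr (R : realType) (t : seq R) : forall (w : nat -> R) (u : seq R),
  (forall l, w l.+1 <= w l) -> sorted (@geR R) u ->
  perm_eq t u -> Fs w t <= Fs w u.
Proof.
elim: t => [|a t0 IH] w u hw hu hp.
  by case: u hu hp => [|c u0] // _ /perm_size.
set v := sort (@geR R) t0.
have hv : sorted (@geR R) v := sort_sorted (@geR_total R) t0.
have hpv : perm_eq t0 v by rewrite perm_sym perm_sort.
apply: (@le_trans _ _ (Fs w (a :: v))).
  rewrite !Fs_cons lerD2l; exact: IH.
apply: ins_le => //; rewrite perm_sym; apply: perm_trans hp.
by rewrite perm_cons perm_sym.
Qed.

Lemma chain (R : realType) (w : nat -> R) : (forall l, w l.+1 <= w l) ->
  forall l m, (l <= m)%N -> w m <= w l.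
Proof.
move=> hw l; elim=> [|m IH]; first by rewrite leqn0 => /eqP->.
rewrite leq_eqVlt => /orP[/eqP->//|]; rewrite ltnS => /IH h.
exact: le_trans (hw m) h.
Qed.

Definition gab (R : realType) (p : nat) (z : 'cV[R]_p.+1) (m : nat) : R := `|z (inord m) 0|.

Lemma magsE (R : realType) (p : nat) (z : 'cV[R]_p.+1) :
  [seq `|z k 0| | k <- enum 'I_p.+1] = map (gab z) (iota 0 p.+1).
Proof.
rewrite -val_enum_ord -map_comp; apply: eq_map => k /=.
by rewrite /gab inord_val.
Qed.

Lemma size_sabs (R : realType) (p : nat) (z : 'cV[R]_p) : size (sorted_abs z) = p.
Proof. by rewrite /sorted_abs size_sort size_map size_enum_ord. Qed.

Lemma sabs_sorted (R : realType) (p : nat) (z : 'cV[R]_p) : sorted (@geR R) (sorted_abs z).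
Proof. exact: (sort_sorted (@geR_total R)). Qed.

Lemma sabs_perm (R : realType) (p : nat) (z : 'cV[R]_p.+1) :
  exists2 Is, perm_eq Is (iota 0 p.+1) & sorted_abs z = map (gab z) Is.
Proof.
have : perm_eq (sorted_abs z) (map (gab z) (iota 0 p.+1)).
  by rewrite -magsE /sorted_abs perm_sort.
case/(perm_iotaP 0) => Is; rewrite size_map size_iota => hI ->.
exists Is => //; apply/eq_in_map => m.
rewrite (perm_mem hI) mem_iota add0n => hm.
by rewrite (nth_map 0%N) ?size_iota // nth_iota.
Qed.

Lemma Fs_map (R : realType) (w : nat -> R) (f : nat -> R) (Is : seq nat) :
  Fs w (map f Is) = \sum_(k < size Is) w k * f (nth 0%N Is k).
Proof. by rewrite /Fs size_map; apply: eq_bigr => k _; rewrite (nth_map 0%N). Qed.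

Lemma owl_dec (R : realType) (p : nat) (w : nat -> R)
  (hw : forall l : nat, (l.+1 < p.+1)%N -> w l.+1 <= w l)
  (x x' : 'cV[R]_p.+1) (i j : 'I_p.+1) (e a b : R) :
  i != j -> 0 <= e -> `|x i 0| = a -> `|x j 0| = b -> `|x' i 0| = a - e ->
  `|x' j 0| = b + e -> (forall k, k != i -> k != j -> `|x' k 0| = `|x k 0|) ->
  b + e < a - e ->
  exists2 P, (P < p)%N & owl w x' + e * (w P - w P.+1) <= owl w x.
Proof.
move=> hij he hxi hxj hx'i hx'j hoth hlt.
pose w' l := w (minn l p).
have hw' : forall l, w' l.+1 <= w' l.
  move=> l; rewrite /w'; case: (ltnP l p) => hl.
    by rewrite (minn_idPl hl); apply: hw.
  have hl1 : (p <= l.+1)%N by apply: leq_trans hl _.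
  by rewrite (minn_idPr hl1).
have Fw : forall z : 'cV[R]_p.+1, owl w z = Fs w' (sorted_abs z).
  move=> z; rewrite /Fs size_sabs /owl; apply: eq_bigr => k _.
  by rewrite /w' (minn_idPl _) // -ltnS.
have [Is hIs hs'] := sabs_perm x'.
have hsz : size Is = p.+1 by rewrite (perm_size hIs) size_iota.
have hu : uniq Is by rewrite (perm_uniq hIs) iota_uniq.
have hmem : forall k : 'I_p.+1, (val k \in Is) by move=> k; rewrite (perm_mem hIs) mem_iota add0n ltn_ord.
have hL : Fs w' (map (gab x) Is) <= Fs w' (sorted_abs x).
  apply: rearr => //; first exact: sabs_sorted.
  apply: (perm_trans (perm_map _ hIs)).
  by rewrite -magsE /sorted_abs perm_sym perm_sort.
have hPlt : (index (val i) Is < size Is)%N by rewrite index_mem.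
have hQlt : (index (val j) Is < size Is)%N by rewrite index_mem.
set P := index (val i) Is in hPlt *; set Q := index (val j) Is in hQlt *.
have hnP : nth 0%N Is P = i by rewrite nth_index.
have hnQ : nth 0%N Is Q = j by rewrite nth_index.
have hgi : forall z : 'cV[R]_p.+1, gab z i = `|z i 0| by move=> z; rewrite /gab inord_val.
have hgj : forall z : 'cV[R]_p.+1, gab z j = `|z j 0| by move=> z; rewrite /gab inord_val.
have hPQ : (P < Q)%N.
  have hne : P != Q.
    apply/eqP => hE; move/eqP: hij; apply; apply: val_inj => /=.
    by rewrite -hnP -hnQ hE.
  rewrite ltn_neqAle hne /=; rewrite leqNgt; apply/negP => hQP.
  have := sorted_ltn_nth (@geR_tr R) 0 (sabs_sorted x') .
  rewrite hs' => /(_ Q P); rewrite !inE size_map => /(_ hQlt hPlt hQP).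
  rewrite /geR !(nth_map 0%N) // hnP hnQ hgi hgj hx'i hx'j => h.
  by move: hlt; rewrite ltNge h.
have hPp : (P < p)%N by move: hQlt; rewrite hsz ltnS => /(leq_trans hPQ).
exists P => //.
have hdiff : Fs w' (map (gab x) Is) = Fs w' (map (gab x') Is) + e * (w' P - w' Q).
  rewrite !Fs_map.
  suff hd : \sum_(k < size Is) w' k * gab x (nth 0%N Is k) - \sum_(k < size Is) w' k * gab x' (nth 0%N Is k) = e * (w' P - w' Q) by lra.
  rewrite -sumrB.
  rewrite (bigD1 (Ordinal hPlt)) //= (bigD1 (Ordinal hQlt)) /=; last first.
    by rewrite -val_eqE /= neq_ltn hPQ orbT.
  rewrite big1 ?addr0.
    rewrite hnP hnQ !hgi !hgj hxi hxj hx'i hx'j; ring.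
  move=> k /andP[hkP hkQ].
  have hk : (nth 0%N Is k < p.+1)%N.
    have : nth 0%N Is k \in iota 0 p.+1 by rewrite -(perm_mem hIs) mem_nth.
    by rewrite mem_iota add0n.
  rewrite /gab hoth ?subrr ?mulr0 //.
    apply/eqP => hE; move/negP: hkP; apply; rewrite -val_eqE /= /P -hE.
    have -> : \val (inord (nth 0%N Is k) : 'I_p.+1) = nth 0%N Is k := inordK hk.
    by rewrite (index_uniq 0%N (ltn_ord k) hu).
  apply/eqP => hE; move/negP: hkQ; apply; rewrite -val_eqE /= /Q -hE.
  have -> : \val (inord (nth 0%N Is k) : 'I_p.+1) = nth 0%N Is k := inordK hk.
  by rewrite (index_uniq 0%N (ltn_ord k) hu).
have hwQ : w' Q <= w' P.+1 := chain hw' hPQ.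
have hw'P : w' P = w P by rewrite /w' (minn_idPl _) // ltnW.
have hw'P1 : w' P.+1 = w P.+1 by rewrite /w' (minn_idPl _).
rewrite !Fw hs'; rewrite hdiff in hL.
rewrite hw'P1 in hwQ; rewrite hw'P in hL.
have : e * (w P - w P.+1) <= e * (w P - w' Q) by apply: ler_wpM2l => //; lra.
lra.
Qed.

Lemma cs_l1 (R : realType) (n : nat) (v : 'I_n -> R) :
  (\sum_(r < n) `|v r|) ^+ 2 <= n%:R * \sum_(r < n) v r ^+ 2.
Proof.
case: n v => [|n] v; first by rewrite !big_ord0 expr0n /= mul0r.
set S := \sum_(r < n.+1) `|v r|; set Q := \sum_(r < n.+1) v r ^+ 2.
set c := S / n.+1%:R.
have hn : 0 < n.+1%:R :> R by rewrite ltr0n.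
have hnc : n.+1%:R * c = S by rewrite /c mulrC divfK // gt_eqF.
have hX : 0 <= \sum_(r < n.+1) (`|v r| - c) ^+ 2 by apply: sumr_ge0 => r _; exact: sqr_ge0.
have hE : \sum_(r < n.+1) (`|v r| - c) ^+ 2 = Q - 2 * c * S + n.+1%:R * c ^+ 2.
  rewrite /Q /S mulr_sumr -sumrB.
  have -> : n.+1%:R * c ^+ 2 = \sum_(r < n.+1) c ^+ 2 by rewrite sumr_const card_ord mulr_natl.
  rewrite -big_split /=; apply: eq_bigr => r _.
  have h2 : `|v r| ^+ 2 = v r ^+ 2 by rewrite real_normK ?num_real.
  rewrite sqrrB h2; ring.
rewrite hE in hX.
have key : 0 <= n.+1%:R * (Q - 2 * c * S + n.+1%:R * c ^+ 2) by apply: mulr_ge0 => //; apply: ltW.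
have e1 : n.+1%:R * (Q - 2 * c * S + n.+1%:R * c ^+ 2) =
    n.+1%:R * Q - 2 * (n.+1%:R * c) * S + (n.+1%:R * c) ^+ 2 by ring.
rewrite e1 hnc in key; nra.
Qed.

Lemma l1_tri (R : realType) (n : nat) (u v : 'cV[R]_n) :
  l1norm u <= l1norm v + l1norm (u - v).
Proof.
rewrite /l1norm -big_split /=; apply: ler_sum => r _.
rewrite !mxE; have := ler_normD (v r 0) (u r 0 - v r 0).
by have -> : v r 0 + (u r 0 - v r 0) = u r 0 by ring.
Qed.

Lemma sum2 (R : realType) (p : nat) (f : 'I_p -> R) (i j : 'I_p) (c d : R) :
  i != j ->
  \sum_k f k * ((if k == j then c else 0) - (if k == i then d else 0)) = f j * c - f i * d.
Proof.
move=> hij.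
rewrite (bigD1 j) //= (bigD1 i) /=; last by rewrite hij.
rewrite big1 ?addr0; last first.
  by move=> k /andP[hkj hki]; rewrite (negbTE hkj) (negbTE hki) subrr mulr0.
by rewrite eqxx (negbTE hij) eq_sym (negbTE hij) eqxx; ring.
Qed.

Lemma key (R : realType) (n p : nat) (A : 'M[R]_(n, p.+1)) (y : 'cV[R]_n)
  (w : nat -> R)
  (hw_noninc : forall l : nat, (l.+1 < p.+1)%N -> w l.+1 <= w l)
  (hA_norm : forall k : 'I_p.+1, \sum_(r < n) A r k ^+ 2 = 1)
  (x : 'cV[R]_p.+1)
  (hmin : forall x' : 'cV[R]_p.+1,
      l1norm (A *m x - y) + owl w x <= l1norm (A *m x' - y) + owl w x')
  (i j : 'I_p.+1)
  (hij : Num.sqrt (n%:R * (2 - 2 * col_corr A i j * Num.sg (x i 0 * x j 0)))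
           < owl_gap p.+1 w)
  (hlt : `|x j 0| < `|x i 0|) : False.
Proof.
have hne : i != j by apply/eqP => h; move: hlt; rewrite h ltxx.
set a : R := `|x i 0|; set b : R := `|x j 0|.
set rho := col_corr A i j.
have hb0 : 0 <= b by apply: normr_ge0.
have hxi0 : x i 0 != 0 by rewrite -normr_gt0; apply: le_lt_trans hlt.
set si := Num.sg (x i 0).
set sj := if x j 0 == 0 then si * (if 0 <= rho then 1 else -1) else Num.sg (x j 0).
have hsi2 : si ^+ 2 = 1 by rewrite /si sqr_sg hxi0.
have hsi1 : `|si| = 1 by rewrite /si normr_sg hxi0.
have hsj2 : sj ^+ 2 = 1.
  rewrite /sj; case: eqP => h; last by move/eqP: h => h; rewrite sqr_sg h.
  by rewrite exprMn hsi2 mul1r; case: ifP => _; rewrite ?sqrrN expr1n.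
have hsj1 : `|sj| = 1.
  have : `|sj| ^+ 2 = 1 by rewrite real_normK ?num_real.
  have : 0 <= `|sj| by [].
  move=> h0 h1; have : (`|sj| - 1) * (`|sj| + 1) = 0 by rewrite -subr_sqr h1 expr1n subrr.
  move/eqP; rewrite mulf_eq0 => /orP[/eqP|/eqP]; lra.
have hxi : x i 0 = si * a by rewrite /si /a -numEsg.
have hxj : x j 0 = sj * b.
  rewrite /sj /b; case: eqP => h; first by rewrite h normr0 mulr0.
  by rewrite -numEsg.
set q := 2 - 2 * rho * Num.sg (x i 0 * x j 0).
have hqq : 2 - 2 * si * sj * rho <= q.
  rewrite /q /sj; case: eqP => h.
    rewrite h mulr0 sgr0 mulr0 subr0.
    case: ifP => hr.
      have -> : 2 * si * (si * 1) * rho = 2 * si ^+ 2 * rho by ring.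
      by rewrite hsi2; lra.
    have -> : 2 * si * (si * -1) * rho = - (2 * si ^+ 2 * rho) by ring.
    by move/negbT: hr; rewrite -ltNge hsi2 => hr; lra.
  by rewrite sgrM /si; lra.
clearbody sj si.
set e := (a - b) / 4.
have he : 0 < e by rewrite /e divr_gt0 // subr_gt0.
have he4 : a - b = 4 * e by rewrite /e mulrC divfK // pnatr_eq0.
clearbody e.
pose x' := \col_k (x k 0 + (if k == j then e * sj else 0) - (if k == i then e * si else 0)).
have hx'i : `|x' i 0| = a - e.
  rewrite /x' mxE (negbTE hne) eqxx addr0 hxi.
  have -> : si * a - e * si = si * (a - e) by ring.
  by rewrite normrM hsi1 mul1r ger0_norm //; lra.
have hx'j : `|x' j 0| = b + e.
  rewrite /x' mxE eqxx eq_sym (negbTE hne) subr0 hxj.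
  have -> : sj * b + e * sj = sj * (b + e) by ring.
  by rewrite normrM hsj1 mul1r ger0_norm //; lra.
have hoth : forall k, k != i -> k != j -> `|x' k 0| = `|x k 0|.
  by move=> k hki hkj; rewrite /x' mxE (negbTE hki) (negbTE hkj) addr0 subr0.
have hlt2 : b + e < a - e.
  lra.
have [P hP hOwl] := owl_dec hw_noninc hne (ltW he) erefl erefl hx'i hx'j hoth hlt2.
have hgap : owl_gap p.+1 w <= w P - w P.+1.
  exact: (bigmin_le _ (Ordinal hP) (fun l : 'I_p => w l - w l.+1)).
pose v := fun r : 'I_n => sj * A r j - si * A r i.
have hdiff : l1norm ((A *m x' - y) - (A *m x - y)) = e * \sum_(r < n) `|v r|.
  rewrite /l1norm mulr_sumr; apply: eq_bigr => r _.
  rewrite !mxE.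
  have -> : \sum_j0 A r j0 * x' j0 0 - y r 0 - (\sum_j0 A r j0 * x j0 0 - y r 0)
      = \sum_j0 A r j0 * ((if j0 == j then e * sj else 0) - (if j0 == i then e * si else 0)).
    have hABC : forall a1 b1 c1 : R, a1 - c1 - (b1 - c1) = a1 - b1 by move=> a1 b1 c1; rewrite opprB addrA subrK.
    rewrite hABC -sumrB; apply: eq_bigr => k _; rewrite /x' mxE. move: (if k == j then _ else _) (if k == i then _ else _) => t1 t2; ring.
  rewrite sum2 // /v.
  have -> : A r j * (e * sj) - A r i * (e * si) = e * (sj * A r j - si * A r i) by ring.
  by rewrite normrM ger0_norm // ltW.
have hq : \sum_(r < n) v r ^+ 2 = 2 - 2 * si * sj * rho.
  have -> : 2 - 2 * si * sj * rho = sj ^+ 2 * \sum_(r < n) A r j ^+ 2 + si ^+ 2 * \sum_(r < n) A r i ^+ 2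
      - 2 * si * sj * rho by rewrite !hA_norm hsi2 hsj2; ring.
  rewrite /rho /col_corr !mulr_sumr -big_split -sumrB /=; apply: eq_bigr => r _.
  rewrite /v; ring.
have hS0 : 0 <= \sum_(r < n) `|v r| by apply: sumr_ge0 => r _.
have hCS := cs_l1 v.
rewrite hq in hCS.
have hn0 : 0 <= n%:R :> R by [].
have hnq : n%:R * (2 - 2 * si * sj * rho) <= n%:R * q by apply: ler_wpM2l.
have hSle : \sum_(r < n) `|v r| <= Num.sqrt (n%:R * q).
  rewrite -(ger0_norm hS0) -sqrtr_sqr ler_sqrt; first exact: le_trans hCS hnq.
  by apply: le_trans hnq; apply: le_trans hCS; apply: sqr_ge0.
have hS : \sum_(r < n) `|v r| < w P - w P.+1 by apply: (le_lt_trans hSle); apply: (lt_le_trans hij).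
have hL := l1_tri (A *m x' - y) (A *m x - y).
rewrite hdiff in hL.
have hm := hmin x'.
have : e * \sum_(r < n) `|v r| < e * (w P - w P.+1) by rewrite ltr_pM2l.
lra.
Qed.

Theorem corollary3 (R : realType) (n p : nat) (A : 'M[R]_(n, p)) (y : 'cV[R]_n)
  (w : nat -> R)
  (hw_noninc : forall l : nat, (l.+1 < p)%N -> w l.+1 <= w l)
  (hw_nneg : forall l : nat, (l < p)%N -> 0 <= w l)
  (hw0 : 0 < w 0%N)
  (hA_center : forall k : 'I_p, \sum_(r < n) A r k = 0)
  (hA_norm : forall k : 'I_p, \sum_(r < n) A r k ^+ 2 = 1)
  (xhat : 'cV[R]_p)
  (hmin : forall x : 'cV[R]_p,
      l1norm (A *m xhat - y) + owl w xhat <= l1norm (A *m x - y) + owl w x)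
  (i j : 'I_p)
  (hij : Num.sqrt (n%:R * (2 - 2 * col_corr A i j * Num.sg (xhat i 0 * xhat j 0)))
           < owl_gap p w) :
  `|xhat i 0| = `|xhat j 0|.
Proof.
revert A hw_noninc hw_nneg hA_center hA_norm xhat hmin i j hij; case: p => [|p]; first by move=> A ? ? ? ? xhat ? [].
move=> A hw_noninc hw_nneg hA_center hA_norm xhat hmin i j hij.
have [hlt|hlt|//] := ltgtP `|xhat i 0| `|xhat j 0|.
  exfalso; apply: (@key R n p A y w hw_noninc hA_norm xhat hmin j i) => //.
  have -> : col_corr A j i = col_corr A i j.
    by rewrite /col_corr; apply: eq_bigr => r _; rewrite mulrC.
  by rewrite (mulrC (xhat j 0)).
exfalso; exact: (@key R n p A y w hw_noninc hA_norm xhat hmin i j).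
Qed.
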